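(* Let $X=\{x_0,\ldots,x_m\}$, $\tilde X=\{\tilde x_1,\ldots,\tilde x_q\}$ (commuting), $c\in\mathbb{R}^q\langle\langle X\rangle\rangle$ proper and $d\in\mathbb{R}^m[[\tilde X]]$ purely improper. Consider the closed-loop system in which the Chen-Fliess series $F_c$ is in multiplicative static output feedback with the formal static map $f_d$: $y=F_c[u]$, $u=v\cdot f_d(y)$ (componentwise product), with external input $v$. Then the closed-loop system is (formally) a Chen-Fliess series $y=F_e[v]$ with generating series given by the multiplicative static feedback product $e=c\,\bar{@}\,d:=c\,\tilde\circ\,\delta_{(d^{-1}\circ c)^{\circ-1}}$, where $d^{-1}\circ c$ is the Wiener-Fliess composition product.
   Context: Chen-Fliess series: $F_c[u](t)=\sum_{\eta\in X^\ast}(c,\eta)E_\eta[u](t,t_0)$, $E_\emptyset=1$, $E_{x_i\bar\eta}[u](t,t_0)=\int_{t_0}^tu_i(\tau)E_{\bar\eta}[u](\tau,t_0)d\tau$, $u_0=1$ (formal). Formal static map: $f_d(z)=\sum_{\eta\in\tilde X^\ast}(d,\eta)z^\eta$, $z\in\mathbb{R}^q$, $z^\emptyset=1$, $z^{\tilde x_i\eta}=z_iz^\eta$. Series conventions: coefficients in $\mathbb{R}^\ell$, componentwise products, proper = zero constant term, purely improper = each component has nonzero constant term; $d^{-1}$ the componentwise Cauchy inverse in $\mathbb{R}^m[[\tilde X]]$. Shuffle product $\sqcup\!\sqcup$: bilinear, $(x_i\eta)\sqcup\!\sqcup(x_j\xi)=x_i(\eta\sqcup\!\sqcup x_j\xi)+x_j(x_i\eta\sqcup\!\sqcup\xi)$,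 $\eta\sqcup\!\sqcup\emptyset=\emptyset\sqcup\!\sqcup\eta=\eta$; $g^{\sqcup\!\sqcup-1}$ componentwise shuffle inverse. Wiener-Fliess composition for proper $c$: $d\circ c=\sum_{\tilde\eta}(d,\tilde\eta)c^{\sqcup\!\sqcup\tilde\eta}$, $c^{\sqcup\!\sqcup\emptyset}=1$, $c^{\sqcup\!\sqcup\tilde x_i\tilde\eta}=c_i\sqcup\!\sqcup c^{\sqcup\!\sqcup\tilde\eta}$; it generates $f_d\circ F_c$. Multiplicative mixed composition: $c\,\tilde\circ\,\delta_g=\sum_\eta(c,\eta)\bar\phi_g(\eta)(\mathbf 1)$, $\mathbf 1=1\emptyset$, $\bar\phi_g(x_0)(w)=x_0w$, $\bar\phi_g(x_i)(w)=x_i(g_i\sqcup\!\sqcup w)$ ($i\ge1$), multiplicative; it generates $v\mapsto F_c[v\cdot F_g[v]]$. For purely improper $g\in\mathbb{R}^m\langle\langle X\rangle\rangle$, $g^{\circ-1}$ is the unique $h$ with $h=g^{\sqcup\!\sqcup-1}\,\tilde\circ\,\delta_h$. *)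

(* Defs.v *)
From mathcomp Require Import all_boot all_order all_algebra.
Set Implicit Arguments. Unset Strict Implicit. Unset Printing Implicit Defensive.
Import Order.TTheory GRing.Theory Num.Theory.
Local Open Scope ring_scope.

Section FliessAlgebra.
Variable R : realFieldType.

(* letters x_0..x_m are the elements of 'I_m.+1 ; x_0 is ord0 *)
Definition word (m : nat) := seq 'I_m.+1.
(* scalar series R<<X>> : coefficient function on words *)
Definition ser (m : nat) := word m -> R.
Definition vser (m l : nat) := 'I_l -> ser m.

Definition words (m n : nat) : seq (word m) :=
  map (@tval n 'I_m.+1) (enum {: n.-tuple 'I_m.+1}).
Arguments words : clear implicits.

(* shuffle product of two words, as a list of words (with multiplicity):
   (a u') sh (b v') = a (u' sh b v') + b (a u' sh v'), and u sh [] = [] sh u = u *)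
Fixpoint shw (T : Type) (u : seq T) : seq T -> seq (seq T) :=
  match u with
  | [::] => fun v => [:: v]
  | a :: u' =>
      fix shv (v : seq T) : seq (seq T) :=
        match v with
        | [::] => [:: a :: u']
        | b :: v' => map (cons a) (shw u' v) ++ map (cons b) (shv v')
        end
  end.

Definition one_ser (m : nat) : ser m := fun w => (w == [::])%:R.
Arguments one_ser : clear implicits.

(* bilinear extension of the word shuffle to series:
   (s sh t, w) = sum_{u,v} (s,u)(t,v)(u sh v, w); only |u|+|v| = |w| contribute *)
Definition shuffle (m : nat) (s t : ser m) : ser m := fun w =>
  \sum_(k < (size w).+1) \sum_(u <- words m k) \sum_(v <- words m (size w - k))
     s u * t v * (count_mem w (shw u v))%:R.

Definition is_shuffle_inv (m : nat) (s t : ser m) : Prop :=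
  forall w, shuffle s t w = one_ser m w.

Definition proper_ser (m l : nat) (c : vser m l) : Prop :=
  forall j, c j [::] = 0.

(* phibar_g(x_0)(s) = x_0 s ; phibar_g(x_i)(s) = x_i (g_i sh s), i >= 1 *)
Definition phi_letter (m : nat) (g : vser m m) (i : 'I_m.+1) (s : ser m) : ser m :=
  fun w => match w with
           | [::] => 0
           | j :: w' =>
               if j == i then
                 match unlift ord0 i with
                 | None => s w'
                 | Some k => shuffle (g k) s w'       (* g_i = g k, k = i-1 *)
                 end
               else 0
           end.

Definition phibar (m : nat) (g : vser m m) (eta : word m) (s : ser m) : ser m :=
  foldr (phi_letter g) s eta.

(* Since phibar_g(eta)(1) is
   supported on words of length >= |eta|, the coefficient at w only involves
   |eta| <= |w| (the sum is exactly this finite sum). *)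
Definition mixcomp (m l : nat) (c : vser m l) (g : vser m m) : vser m l :=
  fun j w => \sum_(k < (size w).+1) \sum_(eta <- words m k) c j eta * phibar g eta (one_ser m) w.

(* monomials z^alpha, alpha an exponent vector *)
Definition expo (q : nat) := {ffun 'I_q -> nat}.
Definition cser (q : nat) := expo q -> R.
Definition expo0 (q : nat) : expo q := [ffun _ => 0%N].
Arguments expo0 : clear implicits.
Definition toexp (q N : nat) (b : {ffun 'I_q -> 'I_N}) : expo q := [ffun i => nat_of_ord (b i)].

Definition cauchy (q : nat) (a b : cser q) : cser q := fun al =>
  \sum_(bb : {ffun 'I_q -> 'I_(\sum_i al i)%N.+1} | [forall i, (bb i <= al i)%N])
     a (toexp bb) * b [ffun i => (al i - bb i)%N].

Definition one_cser (q : nat) : cser q := fun al => (al == expo0 q)%:R.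
Arguments one_cser : clear implicits.

Definition is_cauchy_inv (q : nat) (a ainv : cser q) : Prop :=
  forall al, cauchy a ainv al = one_cser q al.

Definition purely_improper (q l : nat) (d : 'I_l -> cser q) : Prop :=
  forall j, d j (expo0 q) <> 0.

Definition shpow (m : nat) (s : ser m) (n : nat) : ser m := iter n (shuffle s) (one_ser m).
(* c^{sh alpha} = prod_i c_i^{sh alpha_i} (shuffle is commutative) *)
Definition spow (m q : nat) (c : vser m q) (al : expo q) : ser m :=
  foldr (fun i acc => shuffle (shpow (c i) (al i)) acc) (one_ser m) (enum 'I_q).

(* d o c = sum_alpha (d,alpha) c^{sh alpha}, for proper c; c^{sh alpha} is
   supported on words of length >= |alpha|, so only |alpha| <= |w| contribute. *)
Definition wfcomp (m q l : nat) (d : 'I_l -> cser q) (c : vser m q) : vser m l :=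
  fun j w => \sum_(bb : {ffun 'I_q -> 'I_(size w).+1} | (\sum_i (bb i : nat) <= size w)%N)
     d j (toexp bb) * spow c (toexp bb) w.

End FliessAlgebra.

(* Main.v *)
Require Import Defs.
From mathcomp Require Import all_boot all_order all_algebra.
From Stdlib Require Import FunctionalExtensionality.
Set Implicit Arguments. Unset Strict Implicit. Unset Printing Implicit Defensive.
Import GRing.Theory Num.Theory.
Local Open Scope ring_scope.

Section Words.
Variable R : realFieldType.
Variable m : nat.
Local Notation ser := (ser R m).

Lemma sum_words_tuple k (F : word m -> R) :
  \sum_(u <- words m k) F u = \sum_(t : k.-tuple 'I_m.+1) F t.
Proof. by rewrite /words big_map big_enum. Qed.

Lemma sum_words0 (F : word m -> R) : \sum_(u <- words m 0) F u = F [::].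
Proof.
rewrite sum_words_tuple (big_pred1 [tuple]) // => t.
by apply/esym/eqP/val_inj; case: t => [[]].
Qed.

Lemma sum_wordsS k (F : word m -> R) :
  \sum_(u <- words m k.+1) F u = \sum_(b : 'I_m.+1) \sum_(u <- words m k) F (b :: u).
Proof.
rewrite sum_words_tuple.
transitivity (\sum_(b : 'I_m.+1) \sum_(t : k.-tuple 'I_m.+1) F (b :: t)); last first.
  by apply: eq_bigr => b _; rewrite sum_words_tuple.
rewrite pair_big /=.
rewrite (reindex (fun p : 'I_m.+1 * k.-tuple 'I_m.+1 => [tuple of p.1 :: p.2])) //=.
exists (fun t : k.+1.-tuple 'I_m.+1 => (thead t, behead_tuple t)).
  by move=> [b t] _ /=; rewrite theadE; congr pair; apply: val_inj.
by move=> t _; rewrite [in RHS](tuple_eta t).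
Qed.

Lemma words_size k u : u \in words m k -> size u = k.
Proof. by rewrite /words => /mapP [t _ ->]; rewrite size_tuple. Qed.

End Words.


Section Shuffle.
Variable R : realFieldType.
Variable m : nat.
Local Notation ser := (ser R m).

Definition D (a : 'I_m.+1) (s : ser) : ser := fun w => s (a :: w).

Lemma shw_nil_r (T : Type) (u : seq T) : shw u [::] = [:: u].
Proof. by case: u. Qed.

Lemma count_map_cons (a b : 'I_m.+1) w (l : seq (word m)) :
  count_mem (a :: w) (map (cons b) l) = ((b == a) * count_mem w l)%N.
Proof.
elim: l => [|x l IH] /=; first by rewrite muln0.
by rewrite IH eqseq_cons mulnDr; case: (b == a); case: (x == w).
Qed.

Lemma count_shw_cons (a : 'I_m.+1) w (u v : word m) :
  count_mem (a :: w) (shw u v) =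
  ((if u is b :: u' then (b == a) * count_mem w (shw u' v) else 0) +
   (if v is c :: v' then (c == a) * count_mem w (shw u v') else 0))%N.
Proof.
case: u => [|b u']; case: v => [|c v'] //=.
- by rewrite eqseq_cons; case: (c == a); case: (v' == w).
- by rewrite shw_nil_r /= eqseq_cons addn0; case: (b == a); case: (u' == w).
- by rewrite count_cat !count_map_cons.
Qed.

Lemma sh_nil (s t : ser) : shuffle s t [::] = s [::] * t [::].
Proof. by rewrite /shuffle /= big_ord1 !sum_words0 /= mulr1. Qed.

Lemma sh_cons (s t : ser) a w :
  shuffle s t (a :: w) = shuffle (D a s) t w + shuffle s (D a t) w.
Proof.
rewrite /shuffle /=.
under eq_bigr => k _ do under eq_bigr => u _ do under eq_bigr => v _ do
  rewrite count_shw_cons natrD mulrDr.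
under eq_bigr => k _ do under eq_bigr => u _ do rewrite big_split /=.
under eq_bigr => k _ do rewrite big_split /=.
rewrite big_split /=; congr (_ + _).
- rewrite big_ord_recl /= sum_words0 big1 ?add0r; last by move=> v _; rewrite mulr0.
  apply: eq_bigr => k _; rewrite /bump leq0n add1n subSS sum_wordsS.
  rewrite (bigD1 a) //= [X in _ + X]big1 ?addr0.
    by apply: eq_bigr => u _; apply: eq_bigr => v _; rewrite eqxx mul1n.
  move=> b /negbTE nba; rewrite big1 // => u _; rewrite big1 // => v _.
  by rewrite nba mul0n mulr0.
- rewrite big_ord_recr /= subnn.
  rewrite [X in _ + X]big1 ?addr0; last by move=> u _; rewrite sum_words0 mulr0.
  apply: eq_bigr => k _; apply: eq_bigr => u _ /=.
  rewrite subSn ?sum_wordsS; last by rewrite -ltnS.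
  rewrite (bigD1 a) //= [X in _ + X]big1 ?addr0.
    by apply: eq_bigr => v _; rewrite eqxx mul1n.
  move=> b /negbTE nba; rewrite big1 // => v _.
  by rewrite nba mul0n mulr0.
Qed.


Local Notation sh := (@shuffle R m).
Local Notation one := (@one_ser R m).

Lemma D_sh (s t : ser) a : D a (sh s t) = fun w => sh (D a s) t w + sh s (D a t) w.
Proof. by apply: functional_extensionality => w; rewrite /D sh_cons. Qed.

Lemma sh_local w : forall (s s' t t' : ser),
  (forall v, (size v <= size w)%N -> s v = s' v) ->
  (forall v, (size v <= size w)%N -> t v = t' v) ->
  sh s t w = sh s' t' w.
Proof.
elim: w => [|a w IH] s s' t t' Hs Ht; first by rewrite !sh_nil Hs ?Ht.
have Hv1 v : (size v <= size w)%N -> (size v <= size (a :: w))%N by move=> h; apply: leqW.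
rewrite !sh_cons; congr (_ + _); apply: IH => v Hv; rewrite /D.
- by apply: Hs; rewrite /= ltnS.
- by apply: Ht; apply: Hv1.
- by apply: Hs; apply: Hv1.
- by apply: Ht; rewrite /= ltnS.
Qed.

Lemma shC w : forall (s t : ser), sh s t w = sh t s w.
Proof.
elim: w => [|a w IH] s t; first by rewrite !sh_nil mulrC.
by rewrite !sh_cons addrC; congr (_ + _); apply: IH.
Qed.

Lemma shC_f (s t : ser) : sh s t = sh t s.
Proof. by apply: functional_extensionality => w; apply: shC. Qed.

Lemma sh_sumr (I : Type) (r : seq I) w : forall (s : ser) (F : I -> ser),
  sh s (fun v => \sum_(i <- r) F i v) w = \sum_(i <- r) sh s (F i) w.
Proof.
elim: w => [|a w IH] s F; first by rewrite sh_nil mulr_sumr; apply: eq_bigr => i _; rewrite sh_nil.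
rewrite sh_cons IH (IH s (fun i => D a (F i))) -big_split /=.
by apply: eq_bigr => i _; rewrite sh_cons.
Qed.

Lemma sh_addr w : forall (s t1 t2 : ser),
  sh s (fun v => t1 v + t2 v) w = sh s t1 w + sh s t2 w.
Proof.
elim: w => [|a w IH] s t1 t2; first by rewrite !sh_nil mulrDr.
rewrite !sh_cons IH (IH s (D a t1) (D a t2)).
by rewrite -!addrA; congr (_ + _); rewrite addrCA.
Qed.

Lemma sh_addl w (s1 s2 t : ser) :
  sh (fun v => s1 v + s2 v) t w = sh s1 t w + sh s2 t w.
Proof. by rewrite shC sh_addr !(shC _ t). Qed.

Lemma sh_scaler w : forall (r : R) (s t : ser),
  sh s (fun v => r * t v) w = r * sh s t w.
Proof.
elim: w => [|a w IH] r s t; first by rewrite !sh_nil mulrCA.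
by rewrite !sh_cons IH (IH r s (D a t)) mulrDr.
Qed.

Lemma sh0l w : forall (t : ser), sh (fun _ => 0) t w = 0.
Proof.
elim: w => [|a w IH] t; first by rewrite sh_nil mul0r.
rewrite sh_cons; change (sh (fun _ => 0) t w + sh (fun _ => 0) (D a t) w = 0).
by rewrite !IH addr0.
Qed.

Lemma sh1l w : forall (t : ser), sh one t w = t w.
Proof.
elim: w => [|a w IH] t; first by rewrite sh_nil /one_ser eqxx mul1r.
rewrite sh_cons IH.
have -> : D a one = fun _ => 0 by [].
by rewrite sh0l add0r.
Qed.

Lemma sh1l_f (t : ser) : sh one t = t.
Proof. by apply: functional_extensionality => w; apply: sh1l. Qed.

Lemma sh1r_f (t : ser) : sh t one = t.
Proof. by rewrite shC_f sh1l_f. Qed.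

Lemma shA w : forall (s t u : ser), sh (sh s t) u w = sh s (sh t u) w.
Proof.
elim: w => [|a w IH] s t u; first by rewrite !sh_nil mulrA.
by rewrite !sh_cons !D_sh sh_addl sh_addr !IH addrA.
Qed.

Lemma shA_f (s t u : ser) : sh (sh s t) u = sh s (sh t u).
Proof. by apply: functional_extensionality => w; apply: shA. Qed.

End Shuffle.


Section Mix.
Variable R : realFieldType.
Variable m : nat.
Local Notation ser := (ser R m).
Local Notation sh := (@shuffle R m).
Local Notation one := (@one_ser R m).

Lemma sh_zero_r w (s t : ser) :
  (forall u, (size u <= size w)%N -> t u = 0) -> sh s t w = 0.
Proof.
move=> Ht; rewrite (@sh_local _ _ w s s t (fun _ => 0)) // shC.
exact: sh0l.
Qed.

Variable g : vser R m m.

Definition Mg (s : ser) : ser := fun w =>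
  \sum_(k < (size w).+1) \sum_(eta <- words m k) s eta * phibar g eta one w.

Lemma mixcompE l (c : vser R m l) j : mixcomp c g j = Mg (c j).
Proof. by []. Qed.

Lemma phi_support eta : forall v, (size v < size eta)%N -> phibar g eta one v = 0.
Proof.
elim: eta => [|b eta IH] v //=.
case: v => [|a v] //= Hv.
case: (a == b) => //.
case: (unlift ord0 b) => [k|]; last by apply: IH.
apply: sh_zero_r => u Hu; apply: IH.
exact: leq_ltn_trans Hu Hv.
Qed.

Lemma Mg_trunc N v (F : ser) : (size v <= N)%N ->
  \sum_(k < N.+1) \sum_(eta <- words m k) F eta * phibar g eta one v = Mg F v.
Proof.
move=> HN; rewrite /Mg.
rewrite (bigID (fun k : 'I_N.+1 => (k < (size v).+1)%N)) /=.
rewrite [X in _ + X]big1 ?addr0; last first.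
  move=> k; rewrite -leqNgt => Hk.
  rewrite big_seq big1 // => eta /words_size Heta.
  by rewrite phi_support ?mulr0 // Heta.
rewrite (big_ord_widen N.+1 (fun k => \sum_(eta <- words m k) F eta * phibar g eta one v)) //.
Qed.

Lemma Mg_nil (s : ser) : Mg s [::] = s [::].
Proof. by rewrite /Mg /= big_ord1 sum_words0 /= /one_ser eqxx mulr1. Qed.

Lemma Mg_cons (s : ser) a w : Mg s (a :: w) =
  match unlift ord0 a with
  | None => Mg (D a s) w
  | Some k => sh (g k) (Mg (D a s)) w
  end.
Proof.
rewrite {1}/Mg /= big_ord_recl /= sum_words0 {2}/one_ser /= mulr0 add0r.
have E (k : 'I_(size w).+1) : \sum_(eta <- words m (bump 0 k)) s eta * phibar g eta one (a :: w)
   = \sum_(eta <- words m k) s (a :: eta) *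
      match unlift ord0 a with
      | None => phibar g eta one w
      | Some k => sh (g k) (phibar g eta one) w
      end.
  rewrite /bump leq0n add1n sum_wordsS (bigD1 a) //= eqxx [X in _ + X]big1 ?addr0 //.
  by move=> b /negbTE nab; rewrite big1 // => eta _; rewrite eq_sym nab mulr0.
under eq_bigr => k _ do rewrite E.
case: (unlift ord0 a) => [k|] //.
rewrite (@sh_local _ _ w (g k) (g k) _
   (fun v => \sum_(k0 < (size w).+1) \sum_(eta <- words m k0) D a s eta * phibar g eta one v)) //;
  last by move=> v Hv; rewrite Mg_trunc.
rewrite sh_sumr; apply: eq_bigr => i _.
rewrite sh_sumr; apply: eq_bigr => eta _.
by rewrite sh_scaler.
Qed.


Lemma Mg_sum (I : Type) (r : seq I) (F : I -> ser) w :
  Mg (fun v => \sum_(i <- r) F i v) w = \sum_(i <- r) Mg (F i) w.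
Proof.
rewrite /Mg.
under eq_bigr => k _ do under eq_bigr => eta _ do rewrite mulr_suml.
under eq_bigr => k _ do rewrite exchange_big.
by rewrite exchange_big.
Qed.

Lemma Mg_add (s t : ser) w : Mg (fun v => s v + t v) w = Mg s w + Mg t w.
Proof.
rewrite /Mg -big_split; apply: eq_bigr => k _.
by rewrite -big_split; apply: eq_bigr => eta _; rewrite mulrDl.
Qed.

Lemma Mg_scale r (s : ser) w : Mg (fun v => r * s v) w = r * Mg s w.
Proof.
rewrite /Mg mulr_sumr; apply: eq_bigr => k _.
by rewrite mulr_sumr; apply: eq_bigr => eta _; rewrite mulrA.
Qed.

Lemma Mg_one w : Mg one w = one w.
Proof.
rewrite /Mg big_ord_recl sum_words0 /= {1}/one_ser eqxx mul1r.
rewrite big1 ?addr0 // => k _; rewrite /bump leq0n add1n sum_wordsS.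
by rewrite big1 // => b _; rewrite big1 // => eta _; rewrite /one_ser /= mul0r.
Qed.

Lemma Mg_one_f : Mg one = one.
Proof. by apply: functional_extensionality => w; apply: Mg_one. Qed.

Lemma D_Mg (s : ser) a : D a (Mg s) =
  match unlift ord0 a with
  | None => Mg (D a s)
  | Some k => sh (g k) (Mg (D a s))
  end.
Proof.
case E: (unlift ord0 a) => [k|]; apply: functional_extensionality => w;
  by rewrite /D Mg_cons E.
Qed.

Lemma Mg_sh_n n : forall w, (size w <= n)%N -> forall s t : ser,
  Mg (sh s t) w = sh (Mg s) (Mg t) w.
Proof.
elim: n => [|n IH] [|a w] //= Hw s t; rewrite ?Mg_nil ?sh_nil ?Mg_nil //.
rewrite Mg_cons sh_cons !D_Mg D_sh.
have IH' (s' t' : ser) v : (size v <= size w)%N -> Mg (sh s' t') v = sh (Mg s') (Mg t') v.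
  by move=> Hv; apply: IH; apply: leq_trans Hv Hw.
case: (unlift ord0 a) => [k|].
- rewrite (@sh_local _ _ w (g k) (g k) _
    (fun v => sh (Mg (D a s)) (Mg t) v + sh (Mg s) (Mg (D a t)) v)) //; last first.
    by move=> v Hv; rewrite Mg_add !IH'.
  by rewrite sh_addr -!shA -(shC_f (g k)) !shA.
- by rewrite Mg_add !IH'.
Qed.

Lemma Mg_sh_f (s t : ser) : Mg (sh s t) = sh (Mg s) (Mg t).
Proof. by apply: functional_extensionality => w; apply: (@Mg_sh_n (size w)). Qed.

End Mix.

Lemma phibar_local R m (g g' : vser R m m) n eta : forall v,
  (forall k u, (size u < n)%N -> g k u = g' k u) -> (size v <= n)%N ->
  phibar g eta (@one_ser R m) v = phibar g' eta (@one_ser R m) v.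
Proof.
elim: eta => [|b eta IH] v Hg Hv //=.
case: v Hv => [|a v] //= Hv.
case: (a == b) => //.
case: (unlift ord0 b) => [k|]; last by apply: IH => //; apply: ltnW.
apply: sh_local => u Hu.
  by apply: Hg; apply: leq_ltn_trans Hu Hv.
by apply: IH => //; apply: leq_trans Hu (ltnW Hv).
Qed.

Lemma Mg_local R m (g g' : vser R m m) (s : ser R m) w :
  (forall k u, (size u < size w)%N -> g k u = g' k u) -> Mg g s w = Mg g' s w.
Proof.
move=> Hg; rewrite /Mg; apply: eq_bigr => k _; apply: eq_bigr => eta _.
by rewrite (@phibar_local _ _ g g' (size w)).
Qed.



Section Box.
Variable R : realFieldType.

Lemma sum_uniq_sub (T : eqType) (s1 s2 : seq T) (F : T -> R) :
  uniq s1 -> uniq s2 -> {subset s1 <= s2} ->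
  (forall x, x \in s2 -> x \notin s1 -> F x = 0) ->
  \sum_(x <- s1) F x = \sum_(x <- s2) F x.
Proof.
move=> u1 u2 sub H0.
rewrite [RHS](bigID (fun x => x \in s1)) /= [X in _ + X]big1_seq ?addr0; last first.
  by move=> x /andP [nx xs]; apply: H0.
rewrite -[RHS]big_filter; apply: perm_big; apply: uniq_perm => //.
  exact: filter_uniq.
by move=> x; rewrite mem_filter; case E: (x \in s1) => //=; rewrite sub.
Qed.

Variable q : nat.

Definition boxl (N : nat) : seq (expo q) :=
  [seq toexp bb | bb <- enum {: {ffun 'I_q -> 'I_N.+1}}].

Lemma toexp_inj N : injective (@toexp q N.+1).
Proof.
move=> b1 b2 /ffunP H; apply/ffunP => i; apply: val_inj.
by have := H i; rewrite !ffunE.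
Qed.

Lemma boxl_uniq N : uniq (boxl N).
Proof. by rewrite map_inj_uniq ?enum_uniq //; apply: toexp_inj. Qed.

Lemma mem_boxl N (al : expo q) : (al \in boxl N) = [forall i, (al i <= N)%N].
Proof.
apply/idP/idP.
  by move=> /mapP [bb _ ->]; apply/forallP => i; rewrite ffunE -ltnS.
move=> /forallP H; apply/mapP.
exists [ffun i => inord (al i)]; first by rewrite mem_enum.
by apply/ffunP => i; rewrite !ffunE inordK // ltnS.
Qed.

Lemma sum_box N (P : pred (expo q)) (F : expo q -> R) :
  \sum_(bb : {ffun 'I_q -> 'I_N.+1} | P (toexp bb)) F (toexp bb) =
  \sum_(al <- boxl N | P al) F al.
Proof. by rewrite big_map big_enum_cond. Qed.

Definition esz (al : expo q) := (\sum_i al i)%N.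
Definition eadd (b c : expo q) : expo q := [ffun i => (b i + c i)%N].
Definition ele (b a : expo q) := [forall i, (b i <= a i)%N].

Lemma le_esz (al : expo q) i : (al i <= esz al)%N.
Proof. by rewrite /esz (bigD1 i) //= leq_addr. Qed.

Lemma notin_boxl N (al : expo q) : al \notin boxl N -> (N < esz al)%N.
Proof.
rewrite mem_boxl negb_forall => /existsP [i]; rewrite -ltnNge => H.
exact: leq_trans H (le_esz al i).
Qed.

Lemma eadd_inj b : injective (eadd b).
Proof.
move=> c1 c2 /ffunP H; apply/ffunP => i.
by have := H i; rewrite !ffunE => /addnI.
Qed.

End Box.

From mathcomp Require Import zify.

Section Spow.
Variable R : realFieldType.
Variable m : nat.
Local Notation ser := (ser R m).
Local Notation sh := (@shuffle R m).
Local Notation one := (@one_ser R m).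

Definition ordge n (s : ser) := forall v, (size v < n)%N -> s v = 0.
Definition agree n (s s' : ser) := forall v, (size v <= n)%N -> s v = s' v.

Lemma sh_ord w : forall n1 n2 (s t : ser), ordge n1 s -> ordge n2 t ->
  (size w < n1 + n2)%N -> sh s t w = 0.
Proof.
elim: w => [|a w IH] n1 n2 s t Hs Ht /= Hw.
  rewrite sh_nil; case: n1 Hs Hw => [|n1] Hs Hw.
    by rewrite (Ht [::]) ?mulr0.
  by rewrite (Hs [::]) ?mul0r.
rewrite sh_cons (IH n1.-1 n2) ?(IH n1 n2.-1) ?addr0 //.
- by move=> v Hv; apply: Ht => /=; lia.
- lia.
- by move=> v Hv; apply: Hs => /=; lia.
- lia.
Qed.

Lemma sh_ord_f n1 n2 (s t : ser) : ordge n1 s -> ordge n2 t -> ordge (n1 + n2) (sh s t).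
Proof. by move=> Hs Ht v Hv; apply: (sh_ord Hs Ht). Qed.

Lemma sh_agree n (s s' t t' : ser) : agree n s s' -> agree n t t' -> agree n (sh s t) (sh s' t').
Proof.
move=> Hs Ht v Hv; apply: sh_local => u Hu.
  by apply: Hs; apply: leq_trans Hu Hv.
by apply: Ht; apply: leq_trans Hu Hv.
Qed.

Lemma shpow_ord (s : ser) n : s [::] = 0 -> ordge n (shpow s n).
Proof.
move=> H0; elim: n => [|n IH]; first by [].
have H1 : ordge 1 s by case => [|a v] //= _.
exact: (sh_ord_f H1 IH).
Qed.

Lemma shpow_add (s : ser) n1 n2 : shpow s (n1 + n2) = sh (shpow s n1) (shpow s n2).
Proof.
elim: n1 => [|n1 IH]; first by rewrite add0n /= sh1l_f.
by rewrite addSn /shpow /= -/(shpow s (n1 + n2)) IH shA_f.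
Qed.

Lemma shpow_agree n (s s' : ser) k : agree n s s' -> agree n (shpow s k) (shpow s' k).
Proof.
move=> H; elim: k => [|k IH]; first by [].
exact: sh_agree.
Qed.

Variable q : nat.

Lemma spow_ord (x : vser R m q) al : (forall i, x i [::] = 0) -> ordge (esz al) (spow x al).
Proof.
move=> H0.
have -> : esz al = (\sum_(i <- enum 'I_q) al i)%N by rewrite /esz big_enum.
rewrite /spow.
elim: (enum (ordinal q)) => [|i l IH] /=; first by move=> v; rewrite big_nil.
rewrite big_cons; apply: sh_ord_f => //.
exact: shpow_ord.
Qed.

Lemma spow_add (x : vser R m q) b c : spow x (eadd b c) = sh (spow x b) (spow x c).
Proof.
rewrite /spow; elim: (enum 'I_q) => [|i l IH] /=; first by rewrite sh1l_f.
rewrite IH ffunE shpow_add !shA_f; congr (sh _ _).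
by rewrite -!shA_f (shC_f (shpow (x i) (c i))).
Qed.

Lemma spow0 (x : vser R m q) : spow x (expo0 q) = one.
Proof.
rewrite /spow; elim: (enum 'I_q) => [|i l IH] //=.
by rewrite IH ffunE /= sh1l_f.
Qed.

Lemma spow_agree n (x x' : vser R m q) al : (forall i, agree n (x i) (x' i)) ->
  agree n (spow x al) (spow x' al).
Proof.
move=> H; rewrite /spow; elim: (enum 'I_q) => [|i l IH]; first by [].
by apply: sh_agree => //; apply: shpow_agree.
Qed.

Lemma Mg_spow (h : vser R m m) (x : vser R m q) al :
  Mg h (spow x al) = spow (fun i => Mg h (x i)) al.
Proof.
rewrite /spow; elim: (enum 'I_q) => [|i l IH] /=; first exact: Mg_one_f.
rewrite Mg_sh_f IH; congr (sh _ _).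
elim: (al i) => [|k IHk] /=; first exact: Mg_one_f.
by rewrite Mg_sh_f IHk.
Qed.

Definition Wd (dj : cser R q) (x : vser R m q) : ser := fun w =>
  \sum_(bb : {ffun 'I_q -> 'I_(size w).+1} | (\sum_i (bb i : nat) <= size w)%N)
     dj (toexp bb) * spow x (toexp bb) w.

Lemma wfcompE l (d : 'I_l -> cser R q) x j : wfcomp d x j = Wd (d j) x.
Proof. by []. Qed.

Lemma Wd_box N (dj : cser R q) (x : vser R m q) w :
  (forall i, x i [::] = 0) -> (size w <= N)%N ->
  Wd dj x w = \sum_(al <- boxl q N) dj al * spow x al w.
Proof.
move=> H0 HN; rewrite /Wd.
have -> : \sum_(bb : {ffun 'I_q -> 'I_(size w).+1} | (\sum_i (bb i : nat) <= size w)%N)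
     dj (toexp bb) * spow x (toexp bb) w =
   \sum_(bb : {ffun 'I_q -> 'I_(size w).+1} | (esz (toexp bb) <= size w)%N)
     dj (toexp bb) * spow x (toexp bb) w.
  apply: eq_bigl => bb; rewrite /esz; congr (_ <= _)%N.
  by apply: eq_bigr => i _; rewrite ffunE.
rewrite (sum_box (size w) (fun al => esz al <= size w)%N (fun al => dj al * spow x al w)).
rewrite big_mkcond /=.
have -> : \sum_(i <- boxl q (size w)) (if (esz i <= size w)%N then dj i * spow x i w else 0)
   = \sum_(i <- boxl q (size w)) dj i * spow x i w.
  apply: eq_bigr => al _; case: ifP => // /negbT; rewrite -ltnNge => Hal.
  by rewrite (spow_ord (al := al) H0) ?mulr0.
apply: sum_uniq_sub; rewrite ?boxl_uniq //.
  move=> al; rewrite !mem_boxl => /forallP H; apply/forallP => i.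
  exact: leq_trans (H i) HN.
move=> al _ /notin_boxl Hal.
by rewrite (spow_ord (al := al) H0) ?mulr0.
Qed.

End Spow.


Section W.
Variable R : realFieldType.
Variable m q : nat.
Local Notation ser := (ser R m).
Local Notation sh := (@shuffle R m).
Local Notation one := (@one_ser R m).

Definition esub (a b : expo q) : expo q := [ffun i => (a i - b i)%N].

Lemma esub_eadd (b c : expo q) : esub (eadd b c) b = c.
Proof. by apply/ffunP => i; rewrite !ffunE addKn. Qed.

Lemma eadd_esub (b a : expo q) : ele b a -> eadd b (esub a b) = a.
Proof. by move=> /forallP H; apply/ffunP => i; rewrite !ffunE subnKC. Qed.

Lemma ele_eadd (b c : expo q) : ele b (eadd b c).
Proof. by apply/forallP => i; rewrite ffunE leq_addr. Qed.

Lemma eaddC (b c : expo q) : eadd b c = eadd c b.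
Proof. by apply/ffunP => i; rewrite !ffunE addnC. Qed.

Lemma Wd_one (x : vser R m q) w : (forall i, x i [::] = 0) ->
  Wd (@one_cser R q) x w = one w.
Proof.
move=> H0; rewrite (Wd_box (N:=size w)) // (bigD1_seq (expo0 q)) ?boxl_uniq //=; last first.
  by rewrite mem_boxl; apply/forallP => i; rewrite ffunE.
rewrite /one_cser eqxx mul1r spow0 big1 ?addr0 // => al /negbTE ->.
by rewrite mul0r.
Qed.

Lemma cauchy_box N (a b : cser R q) al : al \in boxl q N ->
  cauchy a b al = \sum_(be <- boxl q N | ele be al) a be * b (esub al be).
Proof.
move=> Hal; rewrite /cauchy.
have -> : \sum_(bb : {ffun 'I_q -> 'I_(\sum_i al i).+1} | [forall i, (bb i <= al i)%N])
     a (toexp bb) * b [ffun i => (al i - bb i)%N] =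
   \sum_(bb : {ffun 'I_q -> 'I_(esz al).+1} | ele (toexp bb) al)
     a (toexp bb) * b (esub al (toexp bb)).
  apply: eq_big => [bb|bb _].
    by apply: eq_forallb => i; rewrite ffunE.
  by congr (_ * b _); apply/ffunP => i; rewrite !ffunE.
rewrite (sum_box (esz al) (fun be => ele be al) (fun be => a be * b (esub al be))).
rewrite -big_filter -[RHS]big_filter.
apply: perm_big; apply: uniq_perm; [exact: filter_uniq (boxl_uniq _ _) | exact: filter_uniq (boxl_uniq _ _)|].
move=> be; rewrite !mem_filter; case E: (ele be al); last by [].  rewrite !andTb.
move: Hal; rewrite !mem_boxl => /forallP Hal; move/forallP: E => E.
apply/idP/idP => _; apply/forallP => i.
  exact: leq_trans (E i) (Hal i).
exact: leq_trans (E i) (le_esz al i).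
Qed.

Lemma Wd_cauchy (a b : cser R q) (x : vser R m q) w : (forall i, x i [::] = 0) ->
  Wd (cauchy a b) x w = sh (Wd a x) (Wd b x) w.
Proof.
move=> H0; set N := size w.
rewrite (@sh_local _ _ w _ (fun v => \sum_(al <- boxl q N) a al * spow x al v)
                        _ (fun v => \sum_(al <- boxl q N) b al * spow x al v)); first last.
- by move=> v Hv; rewrite (Wd_box (N:=N)).
- by move=> v Hv; rewrite (Wd_box (N:=N)).
rewrite sh_sumr.
under eq_bigr => c _ do rewrite sh_scaler shC sh_sumr.
under eq_bigr => c _ do under eq_bigr => be _ do rewrite sh_scaler -spow_add.
rewrite (Wd_box (N:=N)) // big_seq.
under eq_bigr => al Hal do rewrite (cauchy_box a b Hal).
rewrite -big_seq.
transitivity (\sum_(be <- boxl q N) a be *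
   \sum_(al <- boxl q N | ele be al) b (esub al be) * spow x al w).
  under eq_bigr => al _ do rewrite mulr_suml big_mkcond /=.
  rewrite exchange_big /=; apply: eq_bigr => be _.
  rewrite mulr_sumr [RHS]big_mkcond /=; apply: eq_bigr => al _.
  by case: ifP => _; rewrite ?mulr0 ?mul0r // mulrA.
rewrite [RHS](_ : _ = \sum_(be <- boxl q N) a be *
    \sum_(c <- boxl q N) b c * spow x (eadd be c) w); last first.
  under eq_bigr => c _ do rewrite mulr_sumr.
  rewrite exchange_big; apply: eq_bigr => be _.
  by rewrite mulr_sumr; apply: eq_bigr => c _; rewrite eaddC mulrCA.
rewrite big_seq [RHS]big_seq; apply: eq_bigr => be Hbe; congr (_ * _).
rewrite -big_filter.
transitivity (\sum_(al <- map (eadd be) (boxl q N)) b (esub al be) * spow x al w); last first.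
  by rewrite big_map; apply: eq_bigr => c _; rewrite esub_eadd.
apply: sum_uniq_sub.
- exact: filter_uniq (boxl_uniq _ _).
- by rewrite map_inj_uniq ?boxl_uniq //; apply: eadd_inj.
- move=> al; rewrite mem_filter => /andP [Hle Hal]; apply/mapP.
  exists (esub al be); last by rewrite eadd_esub.
  move: Hal; rewrite !mem_boxl => /forallP Hal; apply/forallP => i.
  by rewrite ffunE; apply: leq_trans (leq_subr _ _) (Hal i).
- move=> al /mapP [c _ ->]; rewrite mem_filter ele_eadd /= => /notin_boxl Hn.
  by rewrite (spow_ord (al := eadd be c) H0) ?mulr0.
Qed.

Lemma Mg_Wd (h : vser R m m) (dj : cser R q) (x : vser R m q) w :
  (forall i, x i [::] = 0) ->
  Mg h (Wd dj x) w = Wd dj (fun i => Mg h (x i)) w.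
Proof.
move=> H0; set N := size w.
rewrite [RHS](Wd_box (N:=N)) //; last by move=> i; rewrite Mg_nil.
transitivity (\sum_(k < N.+1) \sum_(eta <- words m k)
   (\sum_(al <- boxl q N) dj al * spow x al eta) * phibar h eta one w).
  apply: eq_bigr => k _; rewrite !big_seq; apply: eq_bigr => eta /words_size Heta.
  by rewrite (Wd_box (N:=N)) // Heta -ltnS.
under eq_bigr => k _ do under eq_bigr => eta _ do rewrite mulr_suml.
under eq_bigr => k _ do rewrite exchange_big.
rewrite exchange_big; apply: eq_bigr => al _.
rewrite -Mg_spow /Mg mulr_sumr; apply: eq_bigr => k _.
by rewrite mulr_sumr; apply: eq_bigr => eta _; rewrite mulrA.
Qed.

Lemma Wd_local (dj : cser R q) (x x' : vser R m q) w :
  (forall i, agree (size w) (x i) (x' i)) -> Wd dj x w = Wd dj x' w.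
Proof.
move=> H; apply: eq_bigr => bb _; congr (_ * _).
by apply: (spow_agree _ H).
Qed.


End W.


Unset Implicit Arguments.

Theorem theorem18 (R : realFieldType) (m q : nat)
    (c : vser R m q) (d : 'I_m -> cser R q)
    (dinv : 'I_m -> cser R q) (ginv : vser R m m) (h : vser R m m) :
  proper_ser c ->
  purely_improper d ->
  (* dinv = d^{-1}, componentwise Cauchy inverse *)
  (forall j, is_cauchy_inv (d j) (dinv j)) ->
  (* ginv = (d^{-1} o c)^{sh -1}, componentwise shuffle inverse *)
  (forall j, is_shuffle_inv (wfcomp dinv c j) (ginv j)) ->
  (* h = (d^{-1} o c)^{o -1}, i.e. h = (d^{-1} o c)^{sh -1} ~o delta_h *)
  (forall j w, h j w = mixcomp ginv h j w) ->
  let e := mixcomp c h in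
  (forall j w, e j w = mixcomp c (wfcomp d e) j w) /\
  (forall e' : vser R m q, proper_ser e' ->
     (forall j w, e' j w = mixcomp c (wfcomp d e') j w) ->
     forall j w, e' j w = e j w).
Proof.
move=> Hc _ Hinv Hginv Hh e.
have Hhf j : h j = Mg h (ginv j).
  by apply: functional_extensionality => w; rewrite Hh.
have He0 i : e i [::] = 0 by rewrite /e mixcompE Mg_nil Hc.
have KEY j : h j = Wd (d j) e.
  set A := Wd (dinv j) e.
  have hA : shuffle A (h j) = @one_ser R m.
    have -> : A = Mg h (Wd (dinv j) c).
      by apply: functional_extensionality => w; rewrite Mg_Wd.
    rewrite Hhf -Mg_sh_f.
    have -> : shuffle (Wd (dinv j) c) (ginv j) = @one_ser R m.
      by apply: functional_extensionality => w; apply: (Hginv j).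
    exact: Mg_one_f.
  have hB : shuffle (Wd (d j) e) A = @one_ser R m.
    apply: functional_extensionality => w; rewrite -Wd_cauchy //.
    have -> : cauchy (d j) (dinv j) = @one_cser R q.
      by apply: functional_extensionality => al; apply: (Hinv j).
    exact: Wd_one.
  by rewrite -[h j]sh1l_f -hB shA_f hA sh1r_f.
have Hwf : wfcomp d e = h.
  apply: functional_extensionality => j; apply: functional_extensionality => w.
  by rewrite wfcompE KEY.
have P1 : forall j w, e j w = mixcomp c (wfcomp d e) j w by move=> j w; rewrite Hwf.
split=> // e' _ He' j w.
suff H : forall n j w, (size w < n)%N -> e' j w = e j w by apply: (H (size w).+1).
elim=> [|n IH] {}j {}w //= Hw.
rewrite He' P1 !mixcompE; apply: Mg_local => k u Hu.
rewrite !wfcompE; apply: Wd_local => i v Hv; apply: IH.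
exact: leq_ltn_trans Hv (leq_trans Hu Hw).
Qed.
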